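(* Fix $j\ge1$. For every $k\in\mathbb{N}$ with $k+1\ge j$, $$A(k)\le\log(p_{k+1})\exp\!\left(c_1-\frac1{p_j}+\frac{5}{\log(p_{k+1})}\right).$$
   Context: $p_1=2<p_2=3<\cdots$ is the increasing enumeration of the primes. For fixed $j$ and $k\ge j-1$, $A(k)=\prod_{1\le\ell\le k+1,\ \ell\ne j}\frac{p_\ell+1}{p_\ell}$. The constant $c_1\approx0.261497$ is the Meissel–Mertens constant, i.e. $c_1=\lim_{x\to\infty}\big(\sum_{p\le x}1/p-\log\log x\big)$. *)

(* Defs.v *)
From mathcomp Require Import ssreflect ssrfun ssrbool eqtype ssrnat prime.
From Stdlib Require Import Reals.
From Coquelicot Require Import Coquelicot.

Set Implicit Arguments.
Local Open Scope nat_scope.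

Lemma next_prime_ex (m : nat) : exists p, ((m < p)%N && prime p).
Proof. case: (prime_above m) => p H1 H2; exists p; by rewrite H1 H2. Qed.

Definition next_prime (m : nat) : nat := ex_minn (next_prime_ex m).

Fixpoint pr (n : nat) : nat :=
  match n with
  | 0 => 2
  | n'.+1 => next_prime (pr n')
  end.

(* The paper's 1-indexed p_l = nth_prime l (p_1 = 2 < p_2 = 3 < ...). *)
Definition nth_prime (l : nat) : nat := pr l.-1.

Fixpoint prime_recip_sum (N : nat) : R :=
  match N with
  | 0 => 0%R
  | N'.+1 => (prime_recip_sum N' + (if prime N then / INR N else 0))%R
  end.

(* sum_{p <= x} 1/p for real x (x < 1 gives the empty sum) *)
Definition prime_recip_sum_R (x : R) : R :=
  prime_recip_sum (Z.to_nat (Int_part x)).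

Fixpoint prod_upto (j n : nat) : R :=
  match n with
  | 0 => 1%R
  | n'.+1 => (prod_upto j n' *
              (if n == j then 1 else (INR (nth_prime n) + 1) / INR (nth_prime n)))%R
  end.

Definition A (j k : nat) : R := prod_upto j k.+1.

(* Main.v *)
Require Import Defs.
From mathcomp Require Import ssreflect ssrfun ssrbool eqtype ssrnat prime.
From Stdlib Require Import Reals.
From Coquelicot Require Import Coquelicot.
From Stdlib Require Import Lra ZArith FunctionalExtensionality.
From mathcomp Require Import ssreflect ssrfun ssrbool eqtype ssrnat div prime bigop binomial.
From mathcomp Require Import zify.
Close Scope R_scope.

Fixpoint prim (n : nat) : nat :=
  match n with 0 => 1 | m.+1 => prim m * (if prime m.+1 then m.+1 else 1) end.
Fixpoint Qf (a n : nat) : nat :=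
  match n with 0 => 1 | m.+1 => Qf a m * (if (a < m.+1) && prime m.+1 then m.+1 else 1) end.
Fixpoint Pf (a n : nat) : nat :=
  match n with 0 => 1 | m.+1 => Pf a m * (if (a < m.+1) then m.+1 else 1) end.

Lemma Qf_small a n : n <= a -> Qf a n = 1.
Proof.
elim: n => [|n IH] Hn //=; rewrite IH ?(ltnW Hn) //.
by have -> : (a < n.+1) = false by lia.
Qed.

Lemma Pf_small a n : n <= a -> Pf a n = 1.
Proof.
elim: n => [|n IH] Hn //=; rewrite IH ?(ltnW Hn) //.
by have -> : (a < n.+1) = false by lia.
Qed.

Lemma prim_split a d : prim (a + d) = prim a * Qf a (a + d).
Proof.
elim: d => [|d IH]; first by rewrite addn0 Qf_small // muln1.
rewrite addnS /= IH -mulnA; congr (_ * _); congr (_ * _).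
by have -> : (a < (a + d).+1) = true by rewrite ltnS leq_addr.
Qed.

Lemma fact_split2 a d : (a + d)`! = a`! * Pf a (a + d).
Proof.
elim: d => [|d IH]; first by rewrite addn0 Pf_small // muln1.
rewrite addnS factS IH [Pf _ _.+1]/=.
have -> : (a < (a + d).+1) = true by rewrite ltnS leq_addr.
by rewrite mulnC mulnA.
Qed.

Lemma Qf_dvd a n : Qf a n %| Pf a n.
Proof.
elim: n => [|n IH] //=; apply: dvdn_mul => //.
by case: (a < n.+1); case: (prime n.+1).
Qed.

Lemma prime_ndvd_fact p a : prime p -> a < p -> ~~ (p %| a`!).
Proof.
move=> Hp; elim: a => [|a IH] Ha.
  by rewrite fact0 dvdn1; apply/eqP => E; rewrite E in Hp.
rewrite factS Euclid_dvdM // negb_or IH ?(ltnW Ha) // andbT.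
by apply/negP => /(dvdn_leq (ltn0Sn a)); rewrite leqNgt Ha.
Qed.

Lemma Qf_coprime a n : coprime (Qf a n) a`!.
Proof.
elim: n => [|n IH] /=; first by rewrite coprime1n.
rewrite coprimeMl IH /=.
case: ifP => [/andP [Ha Hp]|_]; last by rewrite coprime1n.
by rewrite prime_coprime // prime_ndvd_fact.
Qed.

Lemma two_terms (F : nat -> nat) m n : m.+1 < n -> F m + F m.+1 <= \sum_(0 <= i < n) F i.
Proof.
elim: n => [|n IH] Hn //.
case: (boolP (m.+1 == n)) => [/eqP <-|Hne].
  rewrite big_nat_recr //= big_nat_recr //=; lia.
rewrite big_nat_recr //=; apply: leq_trans (IH _) _; first by lia.
exact: leq_addr.
Qed.

Lemma binom_mid m : 'C(m.*2.+1, m) <= 4 ^ m.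
Proof.
have E1 : 'C(m.*2.+1, m.+1) = 'C(m.*2.+1, m).
  by rewrite -bin_sub; [congr 'C(_, _); lia | lia].
have S : \sum_(0 <= i < (m.*2.+1).+1) 'C(m.*2.+1, i) = 2 ^ m.*2.+1.
  have := expnDn 1 1 m.*2.+1; rewrite big_mkord => ->.
  by apply: eq_bigr => i _; rewrite !exp1n !muln1.
have := two_terms (fun i => 'C(m.*2.+1, i)) m (m.*2.+2).
rewrite S E1 expnS -mul2n expnM /=.
have -> : 2 ^ 2 = 4 by [].
lia.
Qed.

Lemma Qf_le_bin m : Qf m.+1 m.*2.+1 <= 'C(m.*2.+1, m).
Proof.
apply: dvdn_leq; first by rewrite bin_gt0; lia.
have H1 : m.*2.+1`! = m.+1`! * Pf m.+1 m.*2.+1.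
  have -> : m.*2.+1 = m.+1 + m by lia.
  exact: fact_split2.
have H2 : 'C(m.*2.+1, m) * (m`! * m.+1`!) = m.*2.+1`!.
  have -> : m.+1 = m.*2.+1 - m by lia.
  by rewrite bin_fact //; lia.
have Hc : coprime (Qf m.+1 m.*2.+1) (m`! * m.+1`!).
  rewrite coprimeMr Qf_coprime andbT.
  apply: (coprime_dvdr _ (Qf_coprime m.+1 m.*2.+1)).
  by rewrite factS dvdn_mull.
rewrite -(Gauss_dvdl _ Hc) H2 H1.
exact: dvdn_mull (Qf_dvd _ _).
Qed.

Lemma prim_le n : prim n <= 4 ^ n.
Proof.
elim/ltn_ind: n => n IH.
case: (ltnP n 3) => Hn.
  by case: n IH Hn => [|[|[|n]]].
case: (boolP (odd n)) => Ho.
  have [m Em] : exists m, n = m.*2.+1.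
    exists n./2; rewrite -[n in LHS]odd_double_half Ho; lia.
  have -> : n = m.+1 + m by lia.
  rewrite prim_split.
  have -> : m.+1 + m = m.*2.+1 by lia.
  have H1 := IH m.+1 ltac:(lia).
  have H2 := Qf_le_bin m.
  have H3 := binom_mid m.
  have -> : 4 ^ m.*2.+1 = 4 ^ m.+1 * 4 ^ m by rewrite -expnD; congr (_ ^ _); lia.
  apply: leq_mul => //; exact: leq_trans H2 H3.
have [n' En] : exists n', n = n'.+1 by exists n.-1; lia.
rewrite En /=.
have -> : prime n'.+1 = false.
  apply/negbTE; apply/negP => Hp.
  case: (even_prime Hp) => [E|Eo]; first by lia.
  by move: Ho; rewrite En Eo.
rewrite muln1 expnS; apply: leq_trans (IH n' _) _; first by lia.
by apply: leq_pmull.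
Qed.

Open Scope R_scope.

Lemma next_prime_spec (m : nat) : (m < next_prime m)%nat /\ prime (next_prime m) /\
  (forall q : nat, (m < q)%nat -> prime q -> (next_prime m <= q)%nat).
Proof.
rewrite /next_prime; case: ex_minnP => p /andP [H1 H2] H3; split => //; split => //.
by move=> q Hq Hpq; apply: H3; rewrite Hq Hpq.
Qed.

Lemma pr_prime (n : nat) : prime (pr n).
Proof. by case: n => [|n] //=; case: (next_prime_spec (pr n)) => _ []. Qed.

Lemma pr_lt (n : nat) : (pr n < pr n.+1)%nat.
Proof. by case: (next_prime_spec (pr n)). Qed.

Lemma pr_ge2 (n : nat) : (2 <= pr n)%nat.
Proof. exact: prime_gt1 (pr_prime n). Qed.

Lemma pr_gap (n q : nat) : (pr n < q)%nat -> (q < pr n.+1)%nat -> ~~ prime q.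
Proof.
move=> H1 H2; apply/negP => Hq; case: (next_prime_spec (pr n)) => _ [_ H].
by move: (H q H1 Hq); rewrite leqNgt H2.
Qed.

Lemma Pr_S (n : nat) : prime_recip_sum n.+1 =
  prime_recip_sum n + (if prime n.+1 then / INR n.+1 else 0).
Proof. by []. Qed.

Lemma Pr_const (a d : nat) : (forall q : nat, (a < q)%nat -> (q <= a + d)%nat -> ~~ prime q) ->
  prime_recip_sum (a + d) = prime_recip_sum a.
Proof.
elim: d => [|d IH] H; first by rewrite addn0.
rewrite addnS Pr_S.
have Hn : ~~ prime (a + d).+1.
  by apply: H; [rewrite ltnS leq_addr | rewrite addnS].
rewrite (negbTE Hn).
rewrite IH; first lra.
by move=> q Hq1 Hq2; apply: H => //; rewrite addnS ltnW // ltnS.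
Qed.

Fixpoint sumpr (n : nat) : R :=
  match n with 0 => / INR 2 | n'.+1 => sumpr n' + / INR (pr n) end.

Lemma Pr_pr (n : nat) : prime_recip_sum (pr n) = sumpr n.
Proof.
elim: n => [|n IH].
  by rewrite /= /prime_recip_sum /=; lra.
have Hlt := pr_lt n.
have E : pr n.+1 = (pr n + (pr n.+1 - pr n).-1).+1 :> nat.
  by rewrite -addnS prednK ?subn_gt0 // subnKC // ltnW.
have -> : sumpr n.+1 = sumpr n + / INR (pr n.+1) by [].
rewrite {1}E Pr_S Pr_const; last first.
  move=> q H1 H2; apply: (pr_gap _ _ H1); rewrite E ltnS; exact: H2.
rewrite -E pr_prime IH; lra.
Qed.

Lemma INR_pr_pos (n : nat) : 2 <= INR (pr n).
Proof. have H := pr_ge2 n. apply: (le_INR 2). by apply/leP. Qed.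

Lemma factor_le (p : R) : 0 < p -> (p + 1) / p <= exp (/ p).
Proof.
move=> Hp; have := exp_ineq1_le (/ p).
have -> : (p + 1) / p = 1 + / p by field; lra.
lra.
Qed.

Lemma factor_pos (p : R) : 0 < p -> 0 < (p + 1) / p.
Proof. move=> Hp; apply: Rdiv_lt_0_compat; lra. Qed.

Lemma prod_upto_pos (j n : nat) : 0 < prod_upto j n.
Proof.
elim: n => [|n IH] /=; first lra.
apply: Rmult_lt_0_compat => //; case: (_ == _); first lra.
apply: factor_pos; have := INR_pr_pos n; rewrite /nth_prime /=; lra.
Qed.

Lemma prod_upto_le (j n : nat) : (1 <= j)%nat ->
  prod_upto j n.+1 <= exp (sumpr n - (if (j <= n.+1)%nat then / INR (nth_prime j) else 0)).
Proof.
move=> Hj; elim: n => [|n IH].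
  rewrite /= Rmult_1_l.
  case: (boolP (1 == j)%nat) => [/eqP <-|Hne].
    by rewrite leqnn /nth_prime /=; rewrite Rminus_diag exp_0; lra.
  have -> : (j <= 1)%nat = false.
    apply/negbTE; move: Hj Hne; rewrite leq_eqVlt => /orP [/eqP ->|]; first by rewrite eqxx.
    by move=> H _; rewrite -ltnNge.
  rewrite Rminus_0_r; apply: factor_le; lra.
have -> : prod_upto j n.+2 = prod_upto j n.+1 *
   (if n.+2 == j then 1 else (INR (nth_prime n.+2) + 1) / INR (nth_prime n.+2)) by [].
have -> : sumpr n.+1 = sumpr n + / INR (pr n.+1) by [].
have Hpos := prod_upto_pos j n.+1.
have Hp := INR_pr_pos n.+1.
case: (boolP (n.+2 == j)%nat) => [/eqP Ej|Hne].
  rewrite -Ej leqnn Rmult_1_r; rewrite -Ej ltnn in IH.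
  have -> : nth_prime n.+2 = pr n.+1 by [].
  by have -> : sumpr n + / INR (pr n.+1) - / INR (pr n.+1) = sumpr n - 0 by ring.
have -> : (j <= n.+2)%nat = (j <= n.+1)%nat.
  by rewrite (leq_eqVlt j n.+2) eq_sym (negbTE Hne).
have -> : sumpr n + / INR (pr n.+1) -
     (if (j <= n.+1)%nat then / INR (nth_prime j) else 0) =
   (sumpr n - (if (j <= n.+1)%nat then / INR (nth_prime j) else 0)) + / INR (pr n.+1) by ring.
have -> : nth_prime n.+2 = pr n.+1 by [].
rewrite exp_plus; apply: Rmult_le_compat => //; try lra.
  by apply: Rlt_le; apply: factor_pos; lra.
by apply: factor_le; lra.
Qed.

Lemma INR_muln (a b : nat) : INR (a * b)%nat = INR a * INR b.
Proof. by rewrite -multE mult_INR. Qed.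

Lemma INR_addn (a b : nat) : INR (a + b)%nat = INR a + INR b.
Proof. by rewrite -plusE plus_INR. Qed.

Lemma INR_expn (a b : nat) : INR (a ^ b)%nat = INR a ^ b.
Proof. elim: b => [|b IH]; first by rewrite expn0. by rewrite expnS INR_muln IH. Qed.

Lemma INR_lt (a b : nat) : (a < b)%nat -> INR a < INR b.
Proof. by move/ltP; apply: lt_INR. Qed.

Lemma INR_le (a b : nat) : (a <= b)%nat -> INR a <= INR b.
Proof. by move/leP; apply: le_INR. Qed.

Lemma ln_le (x y : R) : 0 < x -> x <= y -> ln x <= ln y.
Proof. move=> Hx [H|->]; [apply: Rlt_le; apply: ln_increasing => // | lra]. Qed.

Lemma ln_le_sub1 (x : R) : 0 < x -> ln x <= x - 1.
Proof. move=> Hx; have := exp_ineq1_le (ln x); rewrite exp_ln //; lra. Qed.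

Fixpoint sm (f : nat -> R) (n : nat) : R :=
  match n with 0 => 0 | m.+1 => sm f m + f m.+1 end.

Lemma sm_le (f g : nat -> R) n : (forall i, (1 <= i <= n)%nat -> f i <= g i) -> sm f n <= sm g n.
Proof.
elim: n => [|n IH] H /=; first lra.
apply: Rplus_le_compat; last by apply: H; rewrite leqnn andbT.
by apply: IH => i /andP [H1 H2]; apply: H; rewrite H1 (leq_trans H2).
Qed.

Lemma sm_ext (f g : nat -> R) n : (forall i, (1 <= i <= n)%nat -> f i = g i) -> sm f n = sm g n.
Proof.
move=> H; apply: Rle_antisym; apply: sm_le => i Hi; rewrite H //; lra.
Qed.

Lemma sm_plus (f g : nat -> R) n : sm (fun i => f i + g i) n = sm f n + sm g n.
Proof. elim: n => [|n IH] /=; [lra | rewrite IH; lra]. Qed.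

Lemma sm_scal (c : R) (f : nat -> R) n : sm (fun i => c * f i) n = c * sm f n.
Proof. elim: n => [|n IH] /=; [lra | rewrite IH; lra]. Qed.

Lemma sm_nonneg (f : nat -> R) n : (forall i, 0 <= f i) -> 0 <= sm f n.
Proof. move=> H; elim: n => [|n IH] /=; [lra | have := H n.+1; lra]. Qed.

Definition fM (m : nat) : R := if prime m then ln (INR m) / INR m else 0.
Definition fth (m : nat) : R := if prime m then ln (INR m) else 0.
Definition fW (N m : nat) : R := INR (logn m N) * ln (INR m).
Definition fG (m : nat) : R := if prime m then ln (INR m) / (INR m * (INR m - 1)) else 0.

Lemma theta_eq n : sm fth n = ln (INR (prim n)).
Proof.
elim: n => [|n IH] /=; first by rewrite ln_1.
have Hp : (0 < prim n)%nat.
  elim: n {IH} => [|n IH] //=; rewrite muln_gt0 IH; by case: ifP.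
rewrite INR_muln ln_mult; first last.
- by case: ifP => _; [apply: (INR_lt 0) | simpl; lra].
- exact: (INR_lt 0).
by rewrite IH /fth; case: ifP => _ //; rewrite ln_1.
Qed.

Lemma theta_le n : sm fth n <= INR n * ln 4.
Proof.
rewrite theta_eq -ln_pow; last lra.
apply: ln_le.
  have Hp : (0 < prim n)%nat.
    elim: n => [|n IH] //=; rewrite muln_gt0 IH; by case: ifP.
  exact: (INR_lt 0).
have -> : 4 = INR 4 by simpl; lra.
rewrite -INR_expn; apply: INR_le; exact: prim_le.
Qed.

Lemma ln_prod_W N n : ln (INR (\prod_(0 <= p < n.+1) p ^ logn p N)) = sm (fW N) n.
Proof.
elim: n => [|n IH].
  by rewrite big_nat1 /= ln_1.
rewrite (@big_nat_recr _ 1%nat muln n.+1 0 (fun p => (p ^ logn p N)%nat)) //= INR_muln ln_mult; first last.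
- by apply: (INR_lt 0); rewrite expn_gt0.
- by apply: (INR_lt 0); apply: prodn_gt0 => i; exact: pfactor_gt0.
rewrite IH INR_expn ln_pow //; last by apply: (INR_lt 0).
Qed.

Lemma ln_W N : (0 < N)%nat -> ln (INR N) = sm (fW N) N.
Proof.
move=> HN; rewrite -ln_prod_W; congr (ln (INR _)).
by rewrite -{1}(partnT HN).
Qed.

Lemma sm_trunc (f : nat -> R) n d : (forall i, (n < i)%nat -> f i = 0) -> sm f (n + d) = sm f n.
Proof.
move=> H; elim: d => [|d IH]; first by rewrite addn0.
by rewrite addnS /= IH H ?ltnS ?leq_addr //; lra.
Qed.

Lemma leq_fact_self n : (n <= n`!)%nat.
Proof.
case: n => [|n] //; apply: dvdn_leq; [exact: fact_gt0 | by apply: dvdn_fact; rewrite leqnn].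
Qed.

Lemma logn_fact_big p n : (n < p)%nat -> logn p n`! = 0%nat.
Proof.
move=> Hp; have Hp0 : (0 < p)%nat := leq_ltn_trans (leq0n n) Hp.
case: (boolP (prime p)) => Pp; last by rewrite lognE (negbTE Pp).
rewrite logn_fact //; apply: big1_seq => k /andP [_]; rewrite mem_index_iota => /andP [Hk _].
apply: divn_small; case: k Hk => [|k] // _.
rewrite expnS; apply: leq_trans Hp _; apply: leq_pmulr.
by rewrite expn_gt0 Hp0.
Qed.

Lemma ln_fact_W n : ln (INR n`!) = sm (fW n`!) n.
Proof.
rewrite ln_W ?fact_gt0 //.
rewrite -(subnKC (leq_fact_self n)) sm_trunc ?subnKC ?leq_fact_self //.
by move=> i Hi; rewrite /fW logn_fact_big //; simpl; lra.
Qed.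

Lemma INR_divn_le n d : (0 < d)%nat -> INR (n %/ d) * INR d <= INR n.
Proof.
move=> Hd; rewrite {2}(divn_eq n d) INR_addn INR_muln.
have := pos_INR (n %% d); lra.
Qed.

Lemma INR_divn_gt n d : (0 < d)%nat -> INR n < (INR (n %/ d) + 1) * INR d.
Proof.
move=> Hd; rewrite {1}(divn_eq n d) INR_addn INR_muln.
have := INR_lt _ _ (ltn_pmod n Hd); lra.
Qed.

Lemma INR_prime_ge2 p : prime p -> 2 <= INR p.
Proof. move=> Hp; have := INR_le _ _ (prime_gt1 Hp); simpl; lra. Qed.

Lemma legendre_up p n : prime p -> INR (logn p n`!) <= INR n / (INR p - 1).
Proof.
move=> Hp; have HP := INR_prime_ge2 _ Hp.
have Hp0 : (0 < p)%nat := prime_gt0 Hp.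
suff H : forall K, INR (\sum_(1 <= k < K.+1) n %/ p ^ k)%nat +
   INR n / ((INR p - 1) * INR p ^ K) <= INR n / (INR p - 1).
  rewrite logn_fact //; have := H n.
  have : 0 <= INR n / ((INR p - 1) * INR p ^ n).
    apply: Rmult_le_pos; first exact: pos_INR.
    apply: Rlt_le; apply: Rinv_0_lt_compat.
    apply: Rmult_lt_0_compat; [lra | apply: pow_lt; lra].
  lra.
elim=> [|K IH].
  rewrite big_geq //= Rmult_1_r; lra.
rewrite big_nat_recr //= INR_addn.
have Hpk : (0 < p ^ K.+1)%nat by rewrite expn_gt0 Hp0.
have Hq := INR_divn_le n _ Hpk.
have HPK : 0 < INR p ^ K by apply: pow_lt; lra.
have E : INR n / ((INR p - 1) * INR p ^ K) - INR n / ((INR p - 1) * (INR p * INR p ^ K))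
   = INR n / (INR p * INR p ^ K) by field; lra.
have Hq' : INR (n %/ p ^ K.+1) <= INR n / (INR p * INR p ^ K).
  rewrite INR_expn /= in Hq.
  apply: (Rmult_le_reg_r (INR p * INR p ^ K)); first by apply: Rmult_lt_0_compat; lra.
  by rewrite /Rdiv Rmult_assoc Rinv_l ?Rmult_1_r //; apply: Rgt_not_eq; apply: Rmult_lt_0_compat; lra.
lra.
Qed.

Lemma legendre_low p n : prime p -> (1 <= n)%nat -> INR n / INR p - 1 <= INR (logn p n`!).
Proof.
move=> Hp Hn; have HP := INR_prime_ge2 _ Hp.
rewrite logn_fact // big_ltn ?ltnS // INR_addn expn1.
have H0 := pos_INR (\sum_(2 <= i < n.+1) n %/ p ^ i)%nat.
have H2 := INR_divn_gt n _ (prime_gt0 Hp).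
have H1 : INR n / INR p < INR (n %/ p) + 1.
  apply: (Rmult_lt_reg_r (INR p)); first lra.
  by rewrite /Rdiv Rmult_assoc Rinv_l ?Rmult_1_r //; lra.
lra.
Qed.

Lemma ln_gt0_prime p : prime p -> 0 < ln (INR p).
Proof.
move=> Hp; rewrite -ln_1; apply: ln_increasing; first lra.
have := INR_prime_ge2 _ Hp; lra.
Qed.

Lemma fW_up n p : (1 <= p)%nat -> fW n`! p <= INR n * fM p + INR n * fG p.
Proof.
move=> H1; rewrite /fW /fM /fG; case: (boolP (prime p)) => Hp; last first.
  rewrite lognE (negbTE Hp) /=; lra.
have HP := INR_prime_ge2 _ Hp; have Hl := ln_gt0_prime _ Hp.
have E : INR n * (ln (INR p) / INR p) + INR n * (ln (INR p) / (INR p * (INR p - 1)))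
  = INR n / (INR p - 1) * ln (INR p) by field; lra.
rewrite E; apply: Rmult_le_compat_r; first lra.
exact: legendre_up.
Qed.

Lemma fW_low n p : (1 <= n)%nat -> INR n * fM p - fth p <= fW n`! p.
Proof.
move=> H1; rewrite /fW /fM /fth; case: (boolP (prime p)) => Hp; last first.
  rewrite lognE (negbTE Hp) /=; lra.
have HP := INR_prime_ge2 _ Hp; have Hl := ln_gt0_prime _ Hp.
have E : INR n * (ln (INR p) / INR p) - ln (INR p) = (INR n / INR p - 1) * ln (INR p)
  by field; lra.
rewrite E; apply: Rmult_le_compat_r; first lra.
exact: legendre_low.
Qed.

Lemma ln_succ_le x : 0 < x -> ln (x + 1) - ln x <= / x.
Proof.
move=> Hx.
have -> : x + 1 = x * ((x + 1) / x) by field; lra.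
rewrite ln_mult; last (by apply: Rdiv_lt_0_compat; lra); last lra.
have := ln_le_sub1 ((x + 1) / x) ltac:(apply: Rdiv_lt_0_compat; lra).
have -> : (x + 1) / x - 1 = / x by field; lra.
lra.
Qed.

Lemma lnfact_up n : ln (INR n`!) <= INR n * ln (INR n).
Proof.
elim: n => [|n IH]; first by rewrite fact0 /= ln_1; lra.
rewrite factS INR_muln ln_mult; first last.
- by apply: (INR_lt 0); exact: fact_gt0.
- by apply: (INR_lt 0).
rewrite S_INR.
case: n IH => [|n] IH.
  by rewrite fact0 /= ln_1; lra.
have H0 : 0 < INR n.+1 by apply: (INR_lt 0).
have : ln (INR n.+1) <= ln (INR n.+1 + 1) by apply: ln_le; lra.
have : 0 <= ln (INR n.+1) by rewrite -ln_1; apply: ln_le; [lra | rewrite S_INR; have := pos_INR n; lra].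
move=> A B.
have := Rmult_le_compat_l (INR n.+1) _ _ (Rlt_le _ _ H0) B.
lra.
Qed.

Lemma lnfact_low n : INR n * ln (INR n) - INR n <= ln (INR n`!).
Proof.
elim: n => [|n IH]; first by rewrite fact0 /= ln_1; lra.
rewrite factS INR_muln ln_mult; first last.
- by apply: (INR_lt 0); exact: fact_gt0.
- by apply: (INR_lt 0).
rewrite S_INR.
case: n IH => [|n] IH.
  rewrite fact0 /= ln_1; lra.
have H0 : 0 < INR n.+1 by apply: (INR_lt 0).
have B := ln_succ_le _ H0.
have := Rmult_le_compat_l (INR n.+1) _ _ (Rlt_le _ _ H0) B.
rewrite Rinv_r; last lra.
lra.
Qed.

Definition fh (m : nat) : R := if (2 <= m)%nat then ln (INR m) / (INR m * (INR m - 1)) else 0.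

Lemma fh_tel n : (2 <= n)%nat -> sm fh n + (ln (INR n) + 3/2) / INR n <= ln 2 + 3/4.
Proof.
elim: n => [|n IH] //; rewrite ltnS leq_eqVlt => /orP [/eqP <-|Hn].
  rewrite /= /fh /=.
  have -> : (1 + 1) = 2 by lra.
  have : 0 < ln 2 by rewrite -ln_1; apply: ln_increasing; lra.
  move=> H; have E : ln 2 / (2 * (2 - 1)) + (ln 2 + 3 / 2) / 2 = ln 2 + 3/4 by field.
  lra.
have IH' := IH Hn.
have -> : sm fh n.+1 = sm fh n + fh n.+1 by [].
have -> : fh n.+1 = ln (INR n.+1) / (INR n.+1 * (INR n.+1 - 1)) by rewrite /fh ltnS ltnW.
rewrite S_INR.
have Hx : 2 <= INR n by have := INR_le _ _ Hn; simpl; lra.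
set x := INR n in Hx IH' *.
have Hd := ln_succ_le x ltac:(lra).
suff : ln (x + 1) / ((x + 1) * (x + 1 - 1)) + (ln (x + 1) + 3 / 2) / (x + 1)
   <= (ln x + 3 / 2) / x by lra.
have -> : ln (x + 1) / ((x + 1) * (x + 1 - 1)) + (ln (x + 1) + 3 / 2) / (x + 1)
   = ((x + 1) * ln (x + 1) + 3/2 * x) / (x * (x + 1)) by field; lra.
have -> : (ln x + 3 / 2) / x = ((x + 1) * ln x + 3/2 * (x + 1)) / (x * (x + 1)) by field; lra.
apply: Rmult_le_compat_r; first by apply: Rlt_le; apply: Rinv_0_lt_compat; nra.
have : (x + 1) * (ln (x + 1) - ln x) <= (x + 1) * / x by apply: Rmult_le_compat_l; lra.
have : (x + 1) * / x <= 3 / 2.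
  apply: (Rmult_le_reg_r x); first lra.
  rewrite Rmult_assoc Rinv_l; lra.
lra.
Qed.

Lemma fh_nonneg m : 0 <= fh m.
Proof.
rewrite /fh; case: ifP => H; last lra.
have Hx : 2 <= INR m by have := INR_le _ _ H; simpl; lra.
apply: Rmult_le_pos.
  by rewrite -ln_1; apply: ln_le; lra.
apply: Rlt_le; apply: Rinv_0_lt_compat; nra.
Qed.

Lemma G_bound n : sm fG n <= ln 2 + 3/4.
Proof.
have H2 : 0 < ln 2 by rewrite -ln_1; apply: ln_increasing; lra.
apply: Rle_trans (_ : sm fh n <= _).
  apply: sm_le => i _; rewrite /fG; case: (boolP (prime i)) => Hp.
    by rewrite /fh prime_gt1 //; lra.
  exact: fh_nonneg.
case: (ltnP n 2) => Hn.
  by case: n Hn => [|[|]] //= _; rewrite /fh /=; lra.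
have := fh_tel n Hn.
have : 0 <= (ln (INR n) + 3 / 2) / INR n.
  have Hx : 2 <= INR n by have := INR_le _ _ Hn; simpl; lra.
  apply: Rmult_le_pos; last by apply: Rlt_le; apply: Rinv_0_lt_compat; lra.
  have : 0 <= ln (INR n) by rewrite -ln_1; apply: ln_le; lra.
  lra.
lra.
Qed.

Lemma ln2_le : ln 2 <= 3/4.
Proof.
have e8 := exp_ineq1_le (1/8).
have e4 : exp (1/4) = exp (1/8) * exp (1/8) by rewrite -exp_plus; congr exp; field.
have e2 : exp (1/2) = exp (1/4) * exp (1/4) by rewrite -exp_plus; congr exp; field.
have e34 : exp (3/4) = exp (1/2) * exp (1/4) by rewrite -exp_plus; congr exp; field.
have h4 : 81/64 <= exp (1/4) by rewrite e4; nra.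
have h2 : 6561/4096 <= exp (1/2) by rewrite e2; nra.
have h34 : 2 <= exp (3/4) by rewrite e34; nra.
rewrite -(ln_exp (3/4)); apply: ln_le; lra.
Qed.

Lemma M_low n : (1 <= n)%nat -> ln (INR n) - (7/4 + ln 2) <= sm fM n.
Proof.
move=> Hn; have H0 : 0 < INR n by apply: (INR_lt 0).
have A1 := lnfact_low n.
have A2 : ln (INR n`!) <= INR n * sm fM n + INR n * sm fG n.
  rewrite ln_fact_W -!sm_scal -sm_plus; apply: sm_le => i /andP [Hi _].
  exact: fW_up.
have A3 := G_bound n.
have A4 : INR n * sm fG n <= INR n * (ln 2 + 3/4) by apply: Rmult_le_compat_l; lra.
apply: (Rmult_le_reg_l (INR n)) => //; lra.
Qed.

Lemma M_up n : (1 <= n)%nat -> sm fM n <= ln (INR n) + 2 * ln 2.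
Proof.
move=> Hn; have H0 : 0 < INR n by apply: (INR_lt 0).
have A1 := lnfact_up n.
have A2 : INR n * sm fM n - sm fth n <= ln (INR n`!).
  rewrite ln_fact_W -!sm_scal.
  have -> : sm (fun i => INR n * fM i) n - sm fth n = sm (fun i => INR n * fM i + - fth i) n.
    rewrite sm_plus; have -> : sm (fun i => - fth i) n = - sm fth n.
      have := sm_scal (-1) fth n.
      have -> : (fun i => -1 * fth i) = (fun i => - fth i) by apply: FunctionalExtensionality.functional_extensionality => i; ring.
      move=> ->; ring.
    ring.
  apply: sm_le => i _; have := fW_low n i Hn; lra.
have A3 := theta_le n.
have E4 : ln 4 = 2 * ln 2.
  have -> : 4 = 2 * 2 by ring.
  rewrite ln_mult; lra.
apply: (Rmult_le_reg_l (INR n)) => //; nra.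
Qed.

Lemma ln_diff_le a b : 0 < a -> a <= b -> ln b - ln a <= (b - a) / a.
Proof.
move=> Ha Hab.
have -> : b = a * (b / a) by field; lra.
have Hq : 0 < b / a by apply: Rdiv_lt_0_compat; lra.
rewrite ln_mult //; have := ln_le_sub1 _ Hq.
have -> : (a * (b / a) - a) / a = b / a - 1 by field; lra.
lra.
Qed.

Lemma ln_pos_ge2 (x : R) : 2 <= x -> 0 < ln x.
Proof. move=> H; rewrite -ln_1; apply: ln_increasing; lra. Qed.

Lemma key_id y : 0 < ln (INR y.+1) ->
  prime_recip_sum y.+1 - sm fM y.+1 / ln (INR y.+1) =
  prime_recip_sum y - sm fM y / ln (INR y.+1).
Proof.
move=> Hl; rewrite Pr_S; have -> : sm fM y.+1 = sm fM y + fM y.+1 by [].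
rewrite /fM; case: ifP => _; last by field; lra.
have H0 : 0 < INR y.+1 by apply: (INR_lt 0).
field; split; lra.
Qed.

Section Abel.
Variable x : nat.
Hypothesis Hx : (2 <= x)%nat.

Let l := ln (INR x + 1).
Let c := / (l * l).
Let L := 7/4 + ln 2.
Let F (y : nat) := prime_recip_sum y - sm fM y / ln (INR y) - ln (ln (INR y))
   - L / ln (INR y) - c / (INR y - 1).

Lemma x_ge2 : 2 <= INR x.
Proof. by have := INR_le _ _ Hx; simpl; lra. Qed.

Lemma l_ge1 : 1 <= l.
Proof.
apply: (Rle_trans _ (ln (exp 1))); first by rewrite ln_exp; lra.
rewrite /l; apply: ln_le; first exact: exp_pos.
have := exp_le_3; have := x_ge2; lra.
Qed.

Lemma F_step y : (x < y)%nat -> F y <= F y.+1.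
Proof.
move=> Hy.
have Hy2 : INR x + 1 <= INR y by rewrite -S_INR; apply: INR_le.
have X2 := x_ge2.
have Hl1 := l_ge1.
set a := ln (INR y).
set b := ln (INR y.+1).
have Hla : l <= a by apply: ln_le; lra.
have Hab : a <= b by apply: ln_le; [lra | rewrite S_INR; lra].
have Hu : b - a <= / INR y by rewrite /b /a S_INR; apply: ln_succ_le; lra.
have Hb : 0 < b by lra.
have Ht : a - L <= sm fM y by rewrite /a; apply: M_low; exact: leq_ltn_trans (leq0n x) Hy.
rewrite /F -/a -/b.
have E := key_id y Hb.
rewrite -/b in E.
have -> : prime_recip_sum y.+1 - sm fM y.+1 / b - ln b - L / b - c / (INR y.+1 - 1)
  = (prime_recip_sum y - sm fM y / b) - ln b - L / b - c / (INR y.+1 - 1) by rewrite -E.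
rewrite S_INR.
set t := sm fM y in Ht *.
set Y := INR y in Hy2 Hu Ht *.
have Hln : ln b - ln a <= (b - a) / a by apply: ln_diff_le; lra.
have H1 : a * (/ a - / b) <= (t + L) * (/ a - / b).
  apply: Rmult_le_compat_r; last lra.
  have : / b <= / a by apply: Rinv_le_contravar; lra.
  lra.
have E1 : a * (/ a - / b) = (b - a) / b by field; lra.
have E2 : (b - a) / a - (b - a) / b = (b - a) * (b - a) * / (a * b) by field; lra.
have H2 : (b - a) * (b - a) <= / Y * / Y.
  apply: Rmult_le_compat; lra.
have H3 : / (a * b) <= c.
  rewrite /c; apply: Rinv_le_contravar; first nra.
  apply: Rmult_le_compat; lra.
have H4 : (b - a) * (b - a) * / (a * b) <= / Y * / Y * c.
  apply: Rmult_le_compat => //.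
  - nra.
  - by apply: Rlt_le; apply: Rinv_0_lt_compat; nra.
have Hc : 0 <= c by apply: Rlt_le; apply: Rinv_0_lt_compat; nra.
have H5 : / Y * / Y * c <= c / (Y - 1) - c / (Y + 1 - 1).
  have -> : c / (Y - 1) - c / (Y + 1 - 1) = c * / (Y * (Y - 1)) by field; lra.
  have -> : / Y * / Y * c = c * / (Y * Y) by field; lra.
  apply: Rmult_le_compat_l => //; apply: Rinv_le_contravar; nra.
have H6 : t / a - t / b - L / b + L / a = (t + L) * (/ a - / b) by field; lra.
lra.
Qed.

Lemma F_mono d : F x.+1 <= F (x.+1 + d).
Proof.
elim: d => [|d IH]; first by rewrite addn0; lra.
rewrite addnS; apply: Rle_trans IH _; apply: F_step.
by rewrite ltnS leq_addr.
Qed.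

Lemma abel y : (x < y)%nat ->
  prime_recip_sum x - ln (ln (INR x)) - 5 / ln (INR x) <=
  prime_recip_sum y - ln (ln (INR y)).
Proof.
move=> Hy.
have Fy : F x.+1 <= F y by rewrite -(subnKC Hy); apply: F_mono.
have X2 := x_ge2.
have Hl1 := l_ge1.
have Hy2 : INR x + 1 <= INR y by rewrite -S_INR; apply: INR_le.
have Hly : 0 < ln (INR y) by apply: ln_pos_ge2; lra.
have Hlx : 0 < ln (INR x) by apply: ln_pos_ge2; lra.
have Hlxl : ln (INR x) <= l by apply: ln_le; lra.
have Hc : 0 <= c by apply: Rlt_le; apply: Rinv_0_lt_compat; nra.
have My : ln (INR y) - L <= sm fM y by apply: M_low; exact: leq_ltn_trans (leq0n x) Hy.
have Fy' : F y <= prime_recip_sum y - ln (ln (INR y)) - 1.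
  rewrite /F.
  have : 1 <= (sm fM y + L) / ln (INR y).
    apply: (Rmult_le_reg_r (ln (INR y))) => //.
    rewrite /Rdiv Rmult_assoc Rinv_l; lra.
  have : 0 <= c / (INR y - 1).
    apply: Rmult_le_pos => //; apply: Rlt_le; apply: Rinv_0_lt_compat; lra.
  move=> *.
  have -> : prime_recip_sum y - sm fM y / ln (INR y) - ln (ln (INR y)) -
      L / ln (INR y) - c / (INR y - 1) = prime_recip_sum y - ln (ln (INR y))
      - (sm fM y / ln (INR y) + L / ln (INR y)) - c / (INR y - 1) by ring.
  have -> : sm fM y / ln (INR y) + L / ln (INR y) = (sm fM y + L) / ln (INR y) by field; lra.
  lra.
have Hl0 : 0 < l by lra.
have Fx : F x.+1 = prime_recip_sum x - sm fM x / l - ln l - L / l - c / INR x.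
  rewrite /F S_INR.
  have E := key_id x ltac:(rewrite S_INR; exact Hl0).
  rewrite S_INR -/l in E.
  have -> : INR x + 1 - 1 = INR x by ring.
  rewrite -/l; lra.
have Mx : sm fM x <= ln (INR x) + 2 * ln 2 by apply: M_up; exact: leq_trans Hx.
have A1 : sm fM x / l + L / l <= 1 + (2 * ln 2 + L) / ln (INR x).
  have -> : sm fM x / l + L / l = (sm fM x + L) / l by field; lra.
  have B1 : (sm fM x + L) / l <= (l + 2 * ln 2 + L) / l.
    apply: Rmult_le_compat_r; first by apply: Rlt_le; apply: Rinv_0_lt_compat.
    lra.
  have E2 : (l + 2 * ln 2 + L) / l = 1 + (2 * ln 2 + L) / l by field; lra.
  have : (2 * ln 2 + L) / l <= (2 * ln 2 + L) / ln (INR x).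
    apply: Rmult_le_compat_l.
      have : 0 < ln 2 by apply: ln_pos_ge2; lra.
      rewrite /L; lra.
    by apply: Rinv_le_contravar.
  lra.
have A2 : ln l - ln (ln (INR x)) <= / 2 / ln (INR x).
  apply: Rle_trans (ln_diff_le _ _ Hlx Hlxl) _.
  have : l - ln (INR x) <= / INR x by rewrite /l; apply: ln_succ_le; lra.
  move=> H; apply: Rmult_le_compat_r; first by apply: Rlt_le; apply: Rinv_0_lt_compat.
  apply: Rle_trans H _; apply: Rinv_le_contravar; lra.
have A3 : c / INR x <= / 2 / ln (INR x).
  rewrite /c.
  have -> : / (l * l) / INR x = / (INR x * l * l) by field; split; lra.
  have -> : / 2 / ln (INR x) = / (2 * ln (INR x)) by field; lra.
  apply: Rinv_le_contravar; first nra.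
  have : 2 * ln (INR x) <= INR x * l by nra.
  nra.
have A4 : 2 * ln 2 + L + 1 <= 5 by have := ln2_le; rewrite /L; lra.
have A5 : (2 * ln 2 + L) / ln (INR x) + / 2 / ln (INR x) + / 2 / ln (INR x) <= 5 / ln (INR x).
  have -> : (2 * ln 2 + L) / ln (INR x) + / 2 / ln (INR x) + / 2 / ln (INR x)
     = (2 * ln 2 + L + 1) / ln (INR x) by field; lra.
  apply: Rmult_le_compat_r => //; apply: Rlt_le; apply: Rinv_0_lt_compat => //.
lra.
Qed.

End Abel.

Lemma c1_bound (c1 : R) (x : nat) :
  is_lim (fun x => (prime_recip_sum_R x - ln (ln x))%R) p_infty c1 ->
  (2 <= x)%nat ->
  prime_recip_sum x - ln (ln (INR x)) - 5 / ln (INR x) <= c1.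
Proof.
move=> Hc Hx; apply: Rnot_lt_le => Hlt.
set v := prime_recip_sum x - ln (ln (INR x)) - 5 / ln (INR x) in Hlt.
have Heps : 0 < v - c1 by lra.
move/is_lim_spec: Hc => /(_ (mkposreal _ Heps)) [M HM].
set y := (x.+1 + Z.to_nat (up M))%nat.
have Hy : M < INR y.
  have [H1 _] := archimed M.
  have : IZR (up M) <= INR (Z.to_nat (up M)).
    case: (Z_lt_le_dec (up M) 0) => Hz.
      have := pos_INR (Z.to_nat (up M)); have := IZR_lt _ _ Hz; lra.
    by rewrite INR_IZR_INZ Z2Nat.id //; lra.
  rewrite /y -plusE plus_INR; have := pos_INR x.+1; lra.
have := HM _ Hy.
rewrite /prime_recip_sum_R Int_part_INR Nat2Z.id.
have := abel x Hx y ltac:(by rewrite /y ltnS leq_addr).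
rewrite -/v => H1 /Rabs_def2 [H2 _].
cbn [pos] in H2; lra.
Qed.

Theorem mainTheorem8 (c1 : R) (j k : nat)
  (Hc1 : is_lim (fun x => (prime_recip_sum_R x - ln (ln x))%R) p_infty c1)
  (Hj : (1 <= j)%nat) (Hjk : (j <= k.+1)%nat) :
  (A j k <= ln (INR (nth_prime k.+1)) *
     exp (c1 - / INR (nth_prime j) + 5 / ln (INR (nth_prime k.+1))))%R.
Proof.
have HA := prod_upto_le j k Hj.
rewrite Hjk -Pr_pr in HA.
have -> : nth_prime k.+1 = pr k by [].
have Hx := pr_ge2 k.
have HB := c1_bound c1 (pr k) Hc1 Hx.
have Hlx : 0 < ln (INR (pr k)) by apply: ln_pos_ge2; have := INR_le _ _ Hx; simpl; lra.
rewrite -{1}(exp_ln (ln (INR (pr k)))) // -exp_plus.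
apply: Rle_trans HA _.
have H : prime_recip_sum (pr k) - / INR (nth_prime j) <=
   ln (ln (INR (pr k))) + (c1 - / INR (nth_prime j) + 5 / ln (INR (pr k))) by lra.
case: H => [H|->]; last lra.
by apply: Rlt_le; apply: exp_increasing.
Qed.
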